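(* Let $R$ be a Noetherian commutative ring of prime characteristic $p>0$ such that for each minimal prime $P$ of $R$, the domain $R/P$ has a module-finite extension domain $S\supseteq R/P$ that is F-regular. Then tight closure commutes with localization in $R$.
   Context: All rings are commutative and Noetherian of prime characteristic $p>0$. For an ideal $I$ of a ring $A$ and $q=p^e$, $I^{[q]}$ denotes the ideal generated by $\{x^q : x\in I\}$. The tight closure $I^*$ of $I$ is the set of $z\in A$ for which there exists $c\in A$, not in any minimal prime of $A$, with $c z^q\in I^{[q]}$ for all $q=p^e \gg 0$. A ring $A$ is F-regular if every ideal of every localization $A[U^{-1}]$ ($U$ a multiplicative system of $A$) equals its own tight closure. We say tight closure commutes with localization in $A$ if for every ideal $I$ of $A$ and every multiplicative system $U\subseteq A$, one has $I^*A[U^{-1}] = (IA[U^{-1}])^*$. *)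

(* Defs.v *)
(* Rings are MathComp commutative rings; ideals are
   predicates R -> Prop. Localizations and quotients are given by their
   standard universal characterizations (ring morphisms). *)
From HB Require Import structures.
From mathcomp Require Import all_boot all_algebra.
Set Implicit Arguments. Unset Strict Implicit. Unset Printing Implicit Defensive.
Import GRing.Theory.
Local Open Scope ring_scope.

Section Ideals.
Variable A : comPzRingType.

Definition is_ideal (I : A -> Prop) : Prop :=
  [/\ I 0, (forall x y, I x -> I y -> I (x + y)) &
      (forall r x, I x -> I (r * x))].

Definition gen_ideal (G : A -> Prop) : A -> Prop := fun z =>
  exists l : seq (A * A), (forall rg, rg \in l -> G rg.2) /\
     z = \sum_(rg <- l) rg.1 * rg.2.

Definition is_prime (P : A -> Prop) : Prop :=
  [/\ is_ideal P, ~ P 1 & (forall a b, P (a * b) -> P a \/ P b)].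

Definition is_minimal_prime (P : A -> Prop) : Prop :=
  is_prime P /\ (forall Q, is_prime Q -> (forall x, Q x -> P x) -> forall x, P x -> Q x).

Definition mult_system (U : A -> Prop) : Prop :=
  U 1 /\ (forall u v, U u -> U v -> U (u * v)).

Definition frob_power (I : A -> Prop) (q : nat) : A -> Prop :=
  gen_ideal (fun y => exists x, I x /\ y = x ^+ q).

Definition tight_closure (p : nat) (I : A -> Prop) : A -> Prop := fun z =>
  exists c : A, (forall P, is_minimal_prime P -> ~ P c) /\
    exists e0 : nat, forall e : nat, (e0 <= e)%N ->
      frob_power I (p ^ e) (c * z ^+ (p ^ e)).

End Ideals.

Definition is_noetherian (A : comPzRingType) : Prop :=
  forall I : A -> Prop, is_ideal I ->
    exists s : seq A, forall x, I x <-> gen_ideal (fun g => g \in s) x.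

Definition is_localization (A B : comPzRingType) (U : A -> Prop)
    (f : {rmorphism A -> B}) : Prop :=
  [/\ (forall u, U u -> exists v, f u * v = 1),
      (forall b, exists a u, U u /\ b * f u = f a) &
      (forall a, f a = 0 -> exists u, U u /\ u * a = 0)].

Definition ext_ideal (A B : comPzRingType) (f : A -> B) (I : A -> Prop) : B -> Prop :=
  gen_ideal (fun y => exists x, I x /\ y = f x).

Definition F_regular (p : nat) (A : comPzRingType) : Prop :=
  forall (B : comPzRingType) (U : A -> Prop) (f : {rmorphism A -> B}),
    mult_system U -> is_localization U f ->
    forall J : B -> Prop, is_ideal J ->
      forall z, tight_closure p J z <-> J z.

Definition tc_commutes_with_localization (p : nat) (A : comPzRingType) : Prop :=
  forall I : A -> Prop, is_ideal I ->
  forall (U : A -> Prop) (B : comPzRingType) (f : {rmorphism A -> B}),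
    mult_system U -> is_localization U f ->
    forall z, ext_ideal f (tight_closure p I) z <-> tight_closure p (ext_ideal f I) z.

Definition is_quotient_by (A B : comPzRingType) (P : A -> Prop)
    (pi : {rmorphism A -> B}) : Prop :=
  (forall b, exists a, pi a = b) /\ (forall a, pi a = 0 <-> P a).

Definition module_finite (D S : comPzRingType) (j : D -> S) : Prop :=
  exists gens : seq S, forall x : S, exists cs : seq D,
    x = \sum_(i < size gens) j (nth 0 cs i) * nth 0 gens i.

(* Main.v *)
Require Import Defs.
From HB Require Import structures.
From mathcomp Require Import all_boot all_algebra.
From Stdlib Require Import Classical ClassicalEpsilon FunctionalExtensionality PropExtensionality.
From Stdlib Require List.
From mathcomp Require Import ring.
Set Implicit Arguments. Unset Strict Implicit. Unset Printing Implicit Defensive.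
Import GRing.Theory.
Local Open Scope ring_scope.

Section GenIdeal.
Variable A : comPzRingType.
Implicit Types (G J I : A -> Prop).

Lemma gen_ideal_is_ideal G : is_ideal (gen_ideal G).
Proof.
split.
- by exists [::]; split => //; rewrite big_nil.
- move=> x y [l1 [H1 ->]] [l2 [H2 ->]]; exists (l1 ++ l2); split; last by rewrite big_cat.
  by move=> rg; rewrite mem_cat => /orP[/H1|/H2].
- move=> r x [l [H ->]]; exists (map (fun rg => (r * rg.1, rg.2)) l); split.
  + by move=> rg /mapP[rg' /H ? ->].
  + by rewrite big_map mulr_sumr; apply: eq_bigr => rg _; rewrite mulrA.
Qed.

Lemma gen_ideal_sub G x : G x -> gen_ideal G x.
Proof.
move=> Gx; exists [:: (1, x)]; split; first by move=> rg; rewrite inE => /eqP ->.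
by rewrite big_seq1 mul1r.
Qed.

Lemma ideal_sum J (I : eqType) (l : seq I) (F : I -> A) :
  is_ideal J -> (forall i, i \in l -> J (F i)) -> J (\sum_(i <- l) F i).
Proof.
move=> [J0 JD JM]; elim: l => [|i l IH] H; first by rewrite big_nil.
rewrite big_cons; apply: JD; first by apply: H; rewrite inE eqxx.
by apply: IH => k kl; apply: H; rewrite inE kl orbT.
Qed.

Lemma gen_ideal_min G J z : is_ideal J -> (forall x, G x -> J x) -> gen_ideal G z -> J z.
Proof.
move=> HJ HG [l [Hl ->]]; apply: ideal_sum => // rg /Hl /HG; case: HJ => _ _; apply.
Qed.

Lemma ideal_opp J x : is_ideal J -> J x -> J (- x).
Proof. by move=> [_ _ JM] Jx; rewrite -mulN1r; apply: JM. Qed.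

Lemma ideal_sub J x y : is_ideal J -> J x -> J y -> J (x - y).
Proof. by move=> HJ Jx Jy; case: (HJ) => _ JD _; apply: JD => //; apply: ideal_opp. Qed.

Lemma ideal_mulr J x r : is_ideal J -> J x -> J (x * r).
Proof. by move=> [_ _ JM] Jx; rewrite mulrC; apply: JM. Qed.

Lemma ideal_add J x y : is_ideal J -> J x -> J y -> J (x + y).
Proof. by move=> [_ JD _]; apply: JD. Qed.

Lemma ideal_0 J : is_ideal J -> J 0.
Proof. by case. Qed.

Lemma gen_ideal_mono G G' z : (forall x, G x -> G' x) -> gen_ideal G z -> gen_ideal G' z.
Proof.
move=> H; apply: gen_ideal_min; first exact: gen_ideal_is_ideal.
by move=> x /H; apply: gen_ideal_sub.
Qed.

Lemma frob_power_ideal I q : is_ideal (frob_power I q).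
Proof. exact: gen_ideal_is_ideal. Qed.

Lemma frob_power_gen I q x : I x -> frob_power I q (x ^+ q).
Proof. by move=> Ix; apply: gen_ideal_sub; exists x. Qed.

End GenIdeal.

Section Morph.
Variables (A B : comPzRingType) (f : {rmorphism A -> B}).

Lemma ext_ideal_is_ideal I : is_ideal (ext_ideal f I).
Proof. exact: gen_ideal_is_ideal. Qed.

Lemma ext_ideal_img I x : I x -> ext_ideal f I (f x).
Proof. by move=> Ix; apply: gen_ideal_sub; exists x. Qed.

Lemma gen_ideal_map G G' z : (forall x, G x -> G' (f x)) ->
  gen_ideal G z -> gen_ideal G' (f z).
Proof.
move=> H [l [Hl ->]]; rewrite rmorph_sum.
apply: ideal_sum; first exact: gen_ideal_is_ideal.
move=> rg /Hl Grg; rewrite rmorphM; case: (gen_ideal_is_ideal G') => _ _; apply.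
by apply: gen_ideal_sub; apply: H.
Qed.

Lemma frob_power_map I q z : frob_power I q z -> frob_power (ext_ideal f I) q (f z).
Proof.
apply: gen_ideal_map => x [y [Iy ->]]; exists (f y); split; last by rewrite rmorphXn.
exact: ext_ideal_img.
Qed.

End Morph.

Section Frob.
Variables (A : comNzRingType) (p : nat).
Hypothesis pA : p \in [pchar A].

Lemma pnat_pe e : [pchar A].-nat (p ^ e)%N.
Proof.
rewrite pnatX; apply/orP; left.
rewrite (eq_pnat _ (pcharf_eq pA)); apply: pnat_id; exact: pcharf_prime pA.
Qed.

Lemma frobD e (x y : A) : (x + y) ^+ (p ^ e) = x ^+ (p ^ e) + y ^+ (p ^ e).
Proof. exact: exprDn_pchar (pnat_pe e). Qed.

Lemma frob_sum e (T : Type) (l : seq T) (F : T -> A) :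
  (\sum_(i <- l) F i) ^+ (p ^ e) = \sum_(i <- l) (F i) ^+ (p ^ e).
Proof.
elim: l => [|i l IH].
  rewrite !big_nil expr0n; have /prime_gt0 p0 := pcharf_prime pA.
  by rewrite expn_eq0 (gtn_eqF p0).
by rewrite !big_cons frobD IH.
Qed.

Lemma gen_ideal_frob e (G : A -> Prop) x : gen_ideal G x ->
  gen_ideal (fun y => exists g, G g /\ y = g ^+ (p ^ e)) (x ^+ (p ^ e)).
Proof.
move=> [l [Hl ->]]; rewrite frob_sum; apply: ideal_sum; first exact: gen_ideal_is_ideal.
move=> rg /Hl Grg; rewrite exprMn; case: (gen_ideal_is_ideal (fun y => exists g, G g /\ y = g ^+ (p ^ e))) => _ _; apply.
by apply: gen_ideal_sub; exists rg.2.
Qed.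

Lemma frob_power_frob e k (I : A -> Prop) x : frob_power I (p ^ e) x ->
  frob_power I (p ^ (e + k)) (x ^+ (p ^ k)).
Proof.
move=> /(gen_ideal_frob k); apply: gen_ideal_mono => y [g [[z [Iz ->]] ->]].
by exists z; split => //; rewrite -exprM -expnD.
Qed.

End Frob.

Section Prodin.
Variable A : comPzRingType.

Fixpoint prodin (Ps : seq (A -> Prop)) (J : A -> Prop) : Prop :=
  match Ps with
  | [::] => J 1
  | P :: Ps' => forall x, P x -> prodin Ps' (fun y => J (x * y))
  end.

Lemma prodin_mono Ps (J J' : A -> Prop) : (forall y, J y -> J' y) -> prodin Ps J -> prodin Ps J'.
Proof.
elim: Ps J J' => [|P Ps IH] J J' H /=; first exact: H.
by move=> HP x Px; apply: (IH _ _ _ (HP x Px)) => y; apply: H.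
Qed.

Lemma prodin_cat Ps1 Ps2 (J J1 J2 : A -> Prop) :
  prodin Ps1 J1 -> prodin Ps2 J2 -> (forall a b, J1 a -> J2 b -> J (a * b)) ->
  prodin (Ps1 ++ Ps2) J.
Proof.
elim: Ps1 J J1 => [|P Ps1 IH] J J1 /= H1 H2 H.
  by apply: prodin_mono H2 => b J2b; rewrite -[b]mul1r; apply: H.
move=> x Px; apply: (IH _ (fun y => J1 (x * y))) => //; first exact: H1.
by move=> a b J1a J2b; rewrite mulrA; apply: H.
Qed.

Lemma prodin_prime Ps (J Q : A -> Prop) : is_prime Q -> prodin Ps J ->
  (forall y, J y -> Q y) -> exists2 P, List.In P Ps & forall x, P x -> Q x.
Proof.
move=> [_ Q1 Qm]; elim: Ps J => [|P Ps IH] J /= HJ HJQ; first by case: Q1; apply: HJQ.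
case: (classic (forall x, P x -> Q x)) => [HP|]; first by exists P; first left.
move=> /not_all_ex_not [x Hx]; have [Px nQx] := imply_to_and _ _ Hx.
have [P' P'in P'Q] := IH _ (HJ x Px) (fun y Jy => match Qm _ _ (HJQ _ Jy) with
   | or_introl h => False_ind _ (nQx h) | or_intror h => h end).
by exists P'; first right.
Qed.

Lemma prodin_nil Ps (J : A -> Prop) y : prodin Ps J -> (forall P, List.In P Ps -> P y) ->
  J (y ^+ size Ps).
Proof.
elim: Ps J => [|P Ps IH] J /= HJ Hy; first by rewrite expr0.
have := IH _ (HJ y (Hy P (or_introl erefl))) (fun P' h => Hy P' (or_intror h)).
by rewrite exprS.
Qed.

End Prodin.

Section Noeth.
Variable A : comPzRingType.
Hypothesis hN : is_noetherian A.

Lemma noeth_max (F : (A -> Prop) -> Prop) J0 : F J0 -> (forall J, F J -> is_ideal J) ->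
  exists J, F J /\ forall J', F J' -> (forall x, J x -> J' x) -> forall x, J' x -> J x.
Proof.
move=> FJ0 Fid; apply: NNPP => Hn.
have H : forall J : {J | F J}, exists J' : {J | F J},
    (forall x, sval J x -> sval J' x) /\ exists x, sval J' x /\ ~ sval J x.
  move=> [J FJ]; apply: NNPP => HJ; apply: Hn; exists J; split => // J' FJ' sub x J'x.
  apply: NNPP => nJx; apply: HJ; exists (exist _ J' FJ'); split => //; by exists x.
pose next J := proj1_sig (constructive_indefinite_description _ (H J)).
have nextP J := proj2_sig (constructive_indefinite_description _ (H J)).
pose chain n := iter n next (exist _ J0 FJ0).
have mono1 n x : sval (chain n) x -> sval (chain n.+1) x.
  by move=> h; rewrite /chain iterS; case: (nextP (chain n)) => + _; apply.
have mono n m x : (n <= m)%N -> sval (chain n) x -> sval (chain m) x.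
  move=> /subnK <-; elim: (m - n)%N => [|k IH] // h; rewrite addSn; exact/mono1/IH.
pose Ui x := exists n, sval (chain n) x.
have idc n : is_ideal (sval (chain n)) by apply: Fid; exact: proj2_sig.
have UiI : is_ideal Ui.
  split.
  - by exists 0%N; case: (idc 0%N).
  - move=> x y [n hx] [m hy]; exists (maxn n m); case: (idc (maxn n m)) => _ hD _.
    by apply: hD; [apply: (mono n) hx; rewrite leq_maxl|apply: (mono m) hy; rewrite leq_maxr].
  - by move=> r x [n hx]; exists n; case: (idc n) => _ _; apply.
have [s hs] := hN UiI.
have [N HN] : exists N, forall g, g \in s -> sval (chain N) g.
  have : forall g, g \in s -> Ui g by move=> g gs; apply/hs/gen_ideal_sub.
  elim: s {hs} => [|g s IH] hg; first by exists 0%N.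
  have [N HN] := IH (fun g' h => hg g' (@mem_behead _ (g :: s) _ h)).
  have [n hn] := hg g (mem_head _ _).
  exists (maxn N n) => g'; rewrite inE => /orP[/eqP->|/HN h].
    by apply: (mono n) hn; rewrite leq_maxr.
  by apply: (mono N) h; rewrite leq_maxl.
have UiN x : Ui x -> sval (chain N) x.
  move/hs; apply: gen_ideal_min; [exact: idc|by move=> g /HN].
case: (nextP (chain N)) => _ [x [h1 h2]]; apply: h2; apply: UiN; by exists N.+1; rewrite /chain iterS.
Qed.

Lemma noeth_prodin (J0 : A -> Prop) : is_ideal J0 ->
  exists Ps, (forall P, List.In P Ps -> is_prime P) /\ prodin Ps J0.
Proof.
move=> J0I; apply: NNPP => HJ0.
pose F (J : A -> Prop) := is_ideal J /\ ~ exists Ps, (forall P, List.In P Ps -> is_prime P) /\ prodin Ps J.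
have [J [[JI HJ] Jmax]] := noeth_max (F := F) (conj J0I HJ0) (fun J h => proj1 h).
have nJ1 : ~ J 1 by move=> J1; apply: HJ; exists [::]; split.
have [a [b [Jab [nJa nJb]]]] : exists a b, J (a * b) /\ ~ J a /\ ~ J b.
  apply: NNPP => Hn; apply: HJ; exists [:: J]; split.
    move=> P [<-|[]]; split => // a b Jab; apply: NNPP => Hab; apply: Hn; exists a, b.
    by split => //; split => h; apply: Hab; [left|right].
  by move=> x Jx /=; rewrite mulr1.
pose Jc c y := exists j r, J j /\ y = j + r * c.
have JcI c : is_ideal (Jc c).
  split.
  - by exists 0, 0; split; [case: JI|rewrite mul0r addr0].
  - move=> x y [j1 [r1 [h1 ->]]] [j2 [r2 [h2 ->]]]; exists (j1 + j2), (r1 + r2); split.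
      exact: ideal_add.
    by rewrite mulrDl addrACA.
  - move=> r x [j [s [h ->]]]; exists (r * j), (r * s); split; first by case: JI => _ _; apply.
    by rewrite mulrDr mulrA.
have JcJ c x : J x -> Jc c x by move=> Jx; exists x, 0; rewrite mul0r addr0.
have Jcc c : Jc c c by exists 0, 1; split; [case: JI|rewrite add0r mul1r].
have getPs c : ~ J c -> exists Ps, (forall P, List.In P Ps -> is_prime P) /\ prodin Ps (Jc c).
  move=> nJc; apply: NNPP => Hn; apply: nJc; apply: (Jmax (Jc c) _ (JcJ c) c (Jcc c)); by split.
have [Ps1 [HP1 H1]] := getPs a nJa; have [Ps2 [HP2 H2]] := getPs b nJb.
apply: HJ; exists (Ps1 ++ Ps2); split.
  by move=> P /(List.in_app_or _ _ _) [/HP1|/HP2].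
apply: (prodin_cat (J := J) H1 H2) => x y [j1 [r1 [h1 ex]]] [j2 [r2 [h2 ey]]].
rewrite ex ey.
rewrite mulrDl; apply: (ideal_add JI); first exact: (ideal_mulr _ JI).
rewrite mulrDr; apply: (ideal_add JI).
  by rewrite -mulrA mulrC; apply: (ideal_mulr _ JI); case: (JI) => _ _; apply.
rewrite mulrACA; case: (JI) => _ _; exact.
Qed.

End Noeth.

Definition pb (P : Prop) : bool := if excluded_middle_informative P then true else false.
Lemma pbE (P : Prop) : pb P = true <-> P.
Proof. by rewrite /pb; case: excluded_middle_informative. Qed.

Lemma count_le (T : Type) (f g : T -> bool) (l : seq T) :
  (forall x, List.In x l -> f x -> g x) -> (count f l <= count g l)%N.
Proof.
elim: l => [|b l IH] H //=.
have H' : forall y, List.In y l -> f y -> g y by move=> y yl; apply: H; right.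
case fb: (f b); case gb: (g b) => /=.
- by rewrite !add1n ltnS; apply: IH.
- by have := H b (or_introl erefl) fb; rewrite gb.
- by rewrite add1n add0n; apply: leqW; apply: IH.
- by rewrite !add0n; apply: IH.
Qed.

Lemma count_lt (T : Type) (f g : T -> bool) (l : seq T) :
  (forall x, List.In x l -> f x -> g x) -> (exists x, List.In x l /\ g x /\ ~~ f x) ->
  (count f l < count g l)%N.
Proof.
elim: l => [|a l IH] Hfg [x [xl [gx fx]]]; first by case: xl.
have Hfg' : forall y, List.In y l -> f y -> g y by move=> y yl; apply: Hfg; right.
have le := count_le Hfg'.
case: xl => [ax|xl] /=.
  subst x; move: fx gx => /negbTE -> -> /=; by rewrite add1n add0n ltnS.
have lt := IH Hfg' (ex_intro _ x (conj xl (conj gx fx))).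
case fa: (f a); case ga: (g a) => /=.
- by rewrite !add1n ltnS.
- by have := Hfg a (or_introl erefl) fa; rewrite ga.
- by rewrite add1n add0n ltnW // ltnS ltnW.
- by rewrite !add0n.
Qed.

Lemma In_filter (T : Type) (f : T -> bool) (l : seq T) x :
  List.In x (filter f l) <-> List.In x l /\ f x.
Proof.
elim: l => [|a l IH] /=; first by split => [|[]].
case fa: (f a) => /=; rewrite IH; split.
- by case=> [<-|[]]; [split; [left|]|split; [right|]].
- by case=> [[<-|xl] fx]; [left|right].
- by case=> xl fx; split; [right|].
- by case=> [[<-|xl] fx]; [rewrite fa in fx|].
Qed.

Definition subp (A : Type) (P Q : A -> Prop) := forall x, P x -> Q x.

Section MinEnum.
Variable A : comPzRingType.
Variable Ps : seq (A -> Prop).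
Hypothesis Psp : forall P, List.In P Ps -> is_prime P.
Hypothesis Ps0 : prodin Ps (fun y => y = 0).

Lemma prime_contains_Ps (Q : A -> Prop) : is_prime Q -> exists2 k, List.In k Ps & subp k Q.
Proof.
move=> QP; apply: (prodin_prime QP Ps0) => y ->; by case: QP => [[]].
Qed.

Definition cnt (P : A -> Prop) := count (fun P' => pb (subp P' P)) Ps.

Lemma contains_minimal_n n : forall (Q k : A -> Prop), is_prime Q -> List.In k Ps -> subp k Q ->
  (cnt k < n)%N -> exists P, is_minimal_prime P /\ subp P Q.
Proof.
elim: n => [|n IH] Q k QP kPs kQ //= ltk.
case: (classic (is_minimal_prime k)) => [km|nkm]; first by exists k.
have [Q' [Q'P [Q'k nkQ']]] : exists Q', is_prime Q' /\ subp Q' k /\ ~ subp k Q'.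
  apply: NNPP => Hn; apply: nkm; split; first exact: Psp.
  move=> Q0 Q0P Q0k; apply: NNPP => h; apply: Hn; by exists Q0.
have [k' k'Ps k'Q'] := prime_contains_Ps Q'P.
have lt : (cnt k' < cnt k)%N.
  apply: count_lt.
    move=> x _ /pbE h; apply/pbE => y /h /k'Q' /Q'k //.
  exists k; split => //; split; first by apply/pbE.
  apply/negP => /pbE h; apply: nkQ' => y /h /k'Q' //.
have [P [Pm PQ']] := IH Q' k' Q'P k'Ps k'Q' (leq_trans lt (ltnSE ltk)).
by exists P; split => // y /PQ' /Q'k /kQ.
Qed.

Lemma contains_minimal (Q : A -> Prop) : is_prime Q -> exists P, is_minimal_prime P /\ subp P Q.
Proof.
move=> QP; have [k kPs kQ] := prime_contains_Ps QP.
exact: (contains_minimal_n (n := (cnt k).+1) QP kPs kQ).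
Qed.

Lemma minimal_in_Ps (P : A -> Prop) : is_minimal_prime P -> List.In P Ps.
Proof.
move=> [PP Pm]; have [k kPs kP] := prime_contains_Ps PP.
have -> : P = k; last by [].
apply: functional_extensionality => x; apply: propositional_extensionality; split.
  exact: (Pm k (Psp kPs) kP).
exact: kP.
Qed.

Definition dec_eqP (x y : A -> Prop) : {x = y} + {x <> y} := excluded_middle_informative (x = y).

Definition minL := List.nodup dec_eqP (filter (fun k => pb (is_minimal_prime k)) Ps).

Lemma minL_NoDup : List.NoDup minL.
Proof. exact: List.NoDup_nodup. Qed.

Lemma minLP (P : A -> Prop) : List.In P minL <-> is_minimal_prime P.
Proof.
rewrite /minL List.nodup_In In_filter; split; first by case=> _ /pbE.
by move=> Pm; split; [apply: minimal_in_Ps|apply/pbE].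
Qed.

Lemma minL_nil (y : A) : (forall P, List.In P minL -> P y) -> y ^+ size Ps = 0.
Proof.
move=> Hy; apply: (prodin_nil Ps0) => k kPs.
have [P [Pm Pk]] := contains_minimal (Psp kPs).
by apply: Pk; apply: Hy; apply/minLP.
Qed.

End MinEnum.

Lemma noeth_min_enum (A : comPzRingType) : is_noetherian A ->
  exists L : seq (A -> Prop), List.NoDup L /\ (forall P, List.In P L <-> is_minimal_prime P) /\
    exists m, forall y, (forall P, List.In P L -> P y) -> y ^+ m = 0.
Proof.
move=> hN.
have I0 : is_ideal (fun y : A => y = 0).
  split => // [x y -> ->|r x ->]; by rewrite ?addr0 ?mulr0.
have [Ps [Psp Ps0]] := noeth_prodin hN I0.
exists (minL Ps); split; first exact: minL_NoDup.
split; first exact: minLP Psp Ps0.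
exists (size Ps); exact: minL_nil Psp Ps0.
Qed.

Lemma minimal_prime_contained (A : comPzRingType) : is_noetherian A ->
  forall Q : A -> Prop, is_prime Q -> exists P, is_minimal_prime P /\ subp P Q.
Proof.
move=> hN Q QP.
have I0 : is_ideal (fun y : A => y = 0).
  split => // [x y -> ->|r x ->]; by rewrite ?addr0 ?mulr0.
have [Ps [Psp Ps0]] := noeth_prodin hN I0.
exact: (contains_minimal Psp Ps0 QP).
Qed.

Section Loc.
Variables (A B : comPzRingType) (U : A -> Prop) (f : {rmorphism A -> B}).
Hypothesis hU : mult_system U.
Hypothesis hL : is_localization U f.

Lemma loc_unit u : U u -> exists v, f u * v = 1.
Proof. by case: hL => h _ _; apply: h. Qed.

Lemma loc_frac b : exists a u, U u /\ b * f u = f a.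
Proof. by case: hL => _ h _; apply: h. Qed.

Lemma loc_eq a a' : f a = f a' -> exists u, U u /\ u * a = u * a'.
Proof.
move=> e; case: hL => _ _ h.
have [u [Uu hu]] : exists u, U u /\ u * (a - a') = 0 by apply: h; rewrite rmorphB e subrr.
by exists u; split => //; apply/eqP; rewrite -subr_eq0 -mulrBr hu.
Qed.

Definition locP (J : A -> Prop) (b : B) := exists u a, U u /\ J a /\ b * f u = f a.

Lemma locP_ideal J : is_ideal J -> is_ideal (locP J).
Proof.
move=> JI; case: hU => U1 UM; split.
- by exists 1, 0; split; [|split; [case: JI|rewrite !rmorph0 ?mul0r]].
- move=> x y [u1 [a1 [U1' [J1 e1]]]] [u2 [a2 [U2' [J2 e2]]]].
  exists (u1 * u2), (a1 * u2 + a2 * u1); split; first exact: UM.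
  split; first by apply: (ideal_add JI); apply: (ideal_mulr _ JI).
  by rewrite rmorphD !rmorphM -e1 -e2 mulrDl !mulrA [y * _ * _]mulrAC.
- move=> r x [u [a [Uu [Ja e]]]]; have [a' [u' [Uu' e']]] := loc_frac r.
  exists (u' * u), (a' * a); split; first exact: UM.
  split; first by rewrite mulrC; apply: (ideal_mulr _ JI).
  by rewrite !rmorphM -e -e' mulrACA.
Qed.

Lemma loc_ext J b : is_ideal J -> ext_ideal f J b <-> locP J b.
Proof.
move=> JI; split.
  apply: gen_ideal_min; first exact: locP_ideal.
  move=> y [x [Jx ->]]; exists 1, x; split; first by case: hU.
  by rewrite rmorph1 mulr1.
move=> [u [a [Uu [Ja e]]]]; have [v hv] := loc_unit Uu.
have -> : b = f a * v by rewrite -e -mulrA hv mulr1.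
by rewrite mulrC; case: (ext_ideal_is_ideal f J) => _ _; apply; apply: ext_ideal_img.
Qed.

Lemma disj_unit (Q : B -> Prop) u : is_prime Q -> U u -> ~ Q (f u).
Proof.
move=> [[_ _ QM] Q1 _] Uu Qu; have [v hv] := loc_unit Uu; apply: Q1.
by rewrite -hv mulrC; apply: QM.
Qed.

Lemma contr_prime (Q : B -> Prop) : is_prime Q -> is_prime (fun x => Q (f x)).
Proof.
move=> [[Q0 QD QM] Q1 Qp]; split.
- split; first by rewrite rmorph0.
  + by move=> x y hx hy; rewrite rmorphD; apply: QD.
  + by move=> r x hx; rewrite rmorphM; apply: QM.
- by rewrite rmorph1.
- by move=> a b; rewrite rmorphM; apply: Qp.
Qed.

Section Ext.
Variable P : A -> Prop.
Hypothesis PP : is_prime P.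
Hypothesis Pdisj : forall u, U u -> ~ P u.

Lemma locP_contr x : locP P (f x) -> P x.
Proof.
move=> [u [a [Uu [Pa e]]]]; rewrite -rmorphM in e.
have [w [Uw hw]] := loc_eq e.
case: PP => [[_ _ PM] _ Pp].
have : P (w * (x * u)) by rewrite hw; apply: PM.
case/Pp => [Pw|]; first by case: (Pdisj Uw).
case/Pp => // Pu; by case: (Pdisj Uu).
Qed.

Lemma locP_prime : is_prime (locP P).
Proof.
have PI : is_ideal P by case: PP.
split; first exact: locP_ideal.
- move=> [u [a [Uu [Pa e]]]]; rewrite mul1r in e.
  have [w [Uw hw]] := loc_eq e.
  case: PP => [[_ _ PM] _ Pp].
  have : P (w * u) by rewrite hw; apply: PM.
  by case/Pp; apply: Pdisj.
- move=> b b' [u [a [Uu [Pa e]]]].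
  have [s [v [Uv es]]] := loc_frac b; have [s' [v' [Uv' es']]] := loc_frac b'.
  case: hU => U1 UM.
  have h : f (s * s' * u) = f (a * (v * v')).
    rewrite !rmorphM -es -es' -e; ring.
  have [w [Uw hw]] := loc_eq h.
  case: PP => [[_ _ PM] _ Pp].
  have : P (w * (s * s' * u)) by rewrite hw mulrCA mulrC; apply: PM.
  case/Pp => [Pw|]; first by case: (Pdisj Uw).
  case/Pp => [|Pu]; last by case: (Pdisj Uu).
  case/Pp => [Ps|Ps'].
    by left; exists v, s.
  by right; exists v', s'.
Qed.

End Ext.

Lemma minimal_contr (Q : B -> Prop) : is_minimal_prime Q -> is_minimal_prime (fun x => Q (f x)).
Proof.
move=> [QP Qm]; split; first exact: contr_prime.
move=> P' P'P P'Q x Qx.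
have disj : forall u, U u -> ~ P' u by move=> u Uu /P'Q; apply: disj_unit.
apply: (locP_contr P'P disj).
apply: (Qm _ (locP_prime P'P disj)) => // b [u [a [Uu [Pa e]]]].
have : Q (b * f u) by rewrite e; apply: P'Q.
by case: (QP) => _ _ Qp; case/Qp => // /(disj_unit QP Uu).
Qed.

Lemma minimal_ext (P : A -> Prop) : is_minimal_prime P -> (forall u, U u -> ~ P u) ->
  is_minimal_prime (locP P).
Proof.
move=> [PP Pm] disj; split; first exact: locP_prime.
move=> Q QP QPe b [u [a [Uu [Pa e]]]].
have sub : forall x, Q (f x) -> P x by move=> x /QPe; apply: locP_contr.
have := Pm _ (contr_prime QP) sub a Pa; rewrite -e.
by case: (QP) => _ _ Qp; case/Qp => // /(disj_unit QP Uu).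
Qed.

End Loc.

Section Trace.
Variables (D S : idomainType) (j : {rmorphism D -> S}).
Hypothesis jinj : injective j.

Fixpoint spanN (l : seq S) : S -> Prop :=
  match l with
  | [::] => fun x => exists d, x = j d
  | h :: l' => fun x => exists d s, spanN l' s /\ x = j d * h + s
  end.

Lemma spanN_j l d : spanN l (j d).
Proof.
elim: l d => [|h l IH] d /=; first by exists d.
by exists 0, (j d); split => //; rewrite rmorph0 mul0r add0r.
Qed.

Lemma spanN_1 l : spanN l 1.
Proof. by rewrite -(rmorph1 j); apply: spanN_j. Qed.

Lemma spanN_add l x y : spanN l x -> spanN l y -> spanN l (x + y).
Proof.
elim: l x y => [|h l IH] x y /=.
  by move=> [d1 ->] [d2 ->]; exists (d1 + d2); rewrite rmorphD.
move=> [d1 [s1 [h1 ->]]] [d2 [s2 [h2 ->]]]; exists (d1 + d2), (s1 + s2); split.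
  exact: IH.
by rewrite rmorphD; ring.
Qed.

Lemma spanN_scale l c x : spanN l x -> spanN l (j c * x).
Proof.
elim: l x => [|h l IH] x /=.
  by move=> [d ->]; exists (c * d); rewrite rmorphM.
move=> [d [s [hs ->]]]; exists (c * d), (j c * s); split; first exact: IH.
by rewrite rmorphM; ring.
Qed.

Definition linN (N : S -> Prop) (phi : S -> D) :=
  (forall x y, N x -> N y -> phi (x + y) = phi x + phi y) /\
  (forall c x, N x -> phi (j c * x) = c * phi x).

Lemma phi_ex l : exists phi, linN (spanN l) phi /\ phi 1 != 0.
Proof.
elim: l => [|h l [phi [[phiD phiZ] phi1]]].
  pose phi x := epsilon (inhabits (0 : D)) (fun d => x = j d).
  have phiE d : phi (j d) = d.
    apply: jinj; rewrite /phi; apply: esym.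
    exact: (epsilon_spec (inhabits (0 : D)) (fun d' => j d = j d') (ex_intro _ d erefl)).
  exists phi; split; last by rewrite -(rmorph1 j) phiE oner_neq0.
  split => [x y [d1 ->] [d2 ->]|c x [d ->]]; first by rewrite -rmorphD !phiE.
  by rewrite -rmorphM !phiE.
case: (classic (exists d, d != 0 /\ spanN l (j d * h))) => [[d [d0 Nd]]|nd].
  exists (fun x => phi (j d * x)); split; last first.
    by rewrite mulr1 -[j d]mulr1 phiZ ?mulf_neq0 //; apply: spanN_1.
  have sub x : spanN (h :: l) x -> spanN l (j d * x).
    move=> [d' [s [hs ->]]]; rewrite mulrDr; apply: spanN_add.
      by rewrite mulrCA; apply: spanN_scale.
    exact: spanN_scale.
  split => [x y hx hy|c x hx].
    by rewrite mulrDr phiD //; [exact: (sub x hx)|exact: (sub y hy)].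
  have -> : j d * (j c * x) = j c * (j d * x) by ring.
  by rewrite phiZ //; apply: sub.
have uniq : forall d1 d2 s1 s2, spanN l s1 -> spanN l s2 -> j d1 * h + s1 = j d2 * h + s2 -> s1 = s2 /\ d1 = d2.
  move=> d1 d2 s1 s2 h1 h2 e.
  have e' : j (d1 - d2) * h = s2 - s1.
    rewrite rmorphB mulrBl.
    have -> : j d1 * h - j d2 * h = (j d1 * h + s1) - (j d2 * h + s1) by ring.
    by rewrite e; ring.
  have dd : d1 - d2 = 0.
    apply: NNPP => nz; apply: nd; exists (d1 - d2); split; first by apply/eqP.
    by rewrite e'; apply: spanN_add => //; rewrite -mulN1r -(rmorphN1 j); apply: spanN_scale.
  move/eqP: dd; rewrite subr_eq0 => /eqP dd; subst d2; split => //.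
  by apply: (addrI (j d1 * h)); rewrite e.
pose sp x := epsilon (inhabits (0 : S)) (fun s => spanN l s /\ exists d, x = j d * h + s).
have spP x : spanN (h :: l) x -> spanN l (sp x) /\ exists d, x = j d * h + sp x.
  move=> [d [s [hs e]]]; apply: (epsilon_spec (inhabits (0 : S)) (fun s => spanN l s /\ exists d, x = j d * h + s)).
  by exists s; split => //; exists d.
have spE x d s : spanN l s -> x = j d * h + s -> sp x = s.
  move=> Ns e; have [Nsp [d' e']] := spP x (ex_intro _ d (ex_intro _ s (conj Ns e))).
  by have [] := uniq d' d _ _ Nsp Ns (etrans (esym e') e).
exists (fun x => phi (sp x)); split; last first.
  by rewrite (spE 1 0 1) ?rmorph0 ?mul0r ?add0r //; apply: spanN_1.
split.
  move=> x y hx hy; have [Nx [dx ex]] := spP x hx; have [Ny [dy ey]] := spP y hy.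
  rewrite (spE (x + y) (dx + dy) (sp x + sp y)) ?phiD //; first exact: spanN_add.
  by rewrite {1}ex {1}ey rmorphD; ring.
move=> c x hx; have [Nx [dx ex]] := spP x hx.
rewrite (spE (j c * x) (c * dx) (j c * sp x)) ?phiZ //; first exact: spanN_scale.
by rewrite {1}ex rmorphM; ring.
Qed.

Lemma spanN_all (gens : seq S) :
  (forall x : S, exists cs : seq D, x = \sum_(i < size gens) j (nth 0 cs i) * nth 0 gens i) ->
  forall x, spanN gens x.
Proof.
move=> H x; have [cs ->] := H x.
elim: gens cs {H} => [|h l IH] cs /=.
  by rewrite big_ord0; exists 0; rewrite rmorph0.
rewrite big_ord_recl /=; exists (nth 0 cs 0), (\sum_(i < size l) j (nth 0 (behead cs) i) * nth 0 l i).
split; first exact: IH.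
congr (_ + _); apply: eq_bigr => i _; congr (j _ * _).
by case: cs => [|c cs] //=; rewrite !nth_nil.
Qed.

Lemma trace_ex : module_finite j ->
  exists phi : S -> D, [/\ (forall x y, phi (x + y) = phi x + phi y),
      (forall c x, phi (j c * x) = c * phi x) & phi 1 != 0].
Proof.
move=> [gens H]; have [phi [[phiD phiZ] phi1]] := phi_ex gens.
exists phi; split => // [x y|c x]; [apply: phiD|apply: phiZ]; exact: spanN_all.
Qed.

End Trace.

Local Notation "x %:F" := (@FracField.tofrac _ x).

Lemma fracB (K : fieldType) (a b c d : K) : c != 0 -> d != 0 ->
  a / c - b / d = (a * d - b * c) / (c * d).
Proof. by move=> c0 d0; field; rewrite c0 d0. Qed.

Lemma fracM (K : fieldType) (a b c d : K) : (a / c) * (b / d) = (a * b) / (c * d).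
Proof. by rewrite invfM mulrACA. Qed.

Section LocFrac.
Variables (S : idomainType) (V : S -> Prop).

Definition goodl (l : seq S) := forall v, v \in l -> V v /\ v != 0.

Definition lpred (x : {fraction S}) : bool :=
  locked (pb (exists s l, goodl l /\ x = s%:F / (\prod_(v <- l) v)%:F)).

Lemma lpredP x : lpred x <-> exists s l, goodl l /\ x = s%:F / (\prod_(v <- l) v)%:F.
Proof. rewrite /lpred -lock; exact: pbE. Qed.

Lemma goodl_neq0 l : goodl l -> (\prod_(v <- l) v)%:F != 0.
Proof.
move=> gl; rewrite tofrac_eq0; rewrite big_seq; apply: (big_ind (fun x => x != 0)); first exact: oner_neq0.
  by move=> x y; rewrite mulf_eq0 negb_or => -> ->.
by move=> v /gl [].
Qed.

Lemma goodl_cat l1 l2 : goodl l1 -> goodl l2 -> goodl (l1 ++ l2).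
Proof. by move=> g1 g2 v; rewrite mem_cat => /orP[/g1|/g2]. Qed.

Lemma lpred_closed : subring_closed lpred.
Proof.
split.
- apply/lpredP; exists 1, [::]; split => //; by rewrite big_nil divr1.
- move=> x y /lpredP [s1 [v1 [h1 ex]]] /lpredP [s2 [v2 [h2 ey]]]; apply/lpredP.
  exists (s1 * \prod_(v <- v2) v - s2 * \prod_(v <- v1) v), (v1 ++ v2); split; first exact: goodl_cat.
  by rewrite ex ey big_cat /= tofracB !tofracM fracB // goodl_neq0.
- move=> x y /lpredP [s1 [v1 [h1 ex]]] /lpredP [s2 [v2 [h2 ey]]]; apply/lpredP.
  exists (s1 * s2), (v1 ++ v2); split; first exact: goodl_cat.
  by rewrite ex ey big_cat !tofracM fracM.
Qed.

Record LT := MkLT { lval : {fraction S}; lvalP : lpred lval }.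
HB.instance Definition _ := [isSub for lval].
HB.instance Definition _ := [Choice of LT by <:].
HB.instance Definition _ := GRing.SubChoice_isSubComNzRing.Build _ _ LT lpred_closed.

Lemma lpred_frac s : lpred (s%:F).
Proof. by apply/lpredP; exists s, [::]; split => //; rewrite big_nil tofrac1 divr1. Qed.

Definition liota (s : S) : LT := MkLT (lpred_frac s).

Lemma iota_zmod : zmod_morphism liota.
Proof. by move=> x y; apply: val_inj; rewrite /= tofracB. Qed.
Lemma iota_monoid : monoid_morphism liota.
Proof. by split => [|x y]; apply: val_inj; rewrite /= ?tofrac1 ?tofracM. Qed.
HB.instance Definition _ := GRing.isZmodMorphism.Build S LT liota iota_zmod.
HB.instance Definition _ := GRing.isMonoidMorphism.Build S LT liota iota_monoid.

Lemma iota_loc : mult_system V -> (forall v, V v -> v != 0) -> is_localization V liota.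
Proof.
move=> [V1 VM] V0; split.
- move=> u Vu; have lp : lpred (1%:F / u%:F).
    by apply/lpredP; exists 1, [:: u]; split; [move=> v; rewrite inE => /eqP ->; split => //; apply: V0|rewrite big_seq1].
  exists (MkLT lp); apply: val_inj => /=; rewrite tofrac1 mul1r divff // tofrac_eq0; exact: V0.
- move=> [x hx]; have [s [l [gl e]]] := (lpredP x).1 hx; exists s, (\prod_(v <- l) v); split.
    rewrite big_seq; apply: (big_ind V) => // v /gl []; done.
  apply: val_inj => /=; rewrite e divfK //; exact: goodl_neq0.
- move=> a ha; exists 1; split => //.
  have : val (liota a) = 0 by rewrite ha.
  by move=> /= /eqP; rewrite tofrac_eq0 mul1r => /eqP.
Qed.

Lemma iota_inj : injective liota.
Proof. by move=> x y /(congr1 val) /= /eqP; rewrite tofrac_eq => /eqP. Qed.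

Lemma LT_nonmin (c : LT) : c != 0 -> forall Q : LT -> Prop, is_minimal_prime Q -> ~ Q c.
Proof.
move=> c0 Q [[[hQ0 _ _] _ _] Qm] Qc.
have ZP : is_prime (fun x : LT => x = 0).
  split.
  - split => // [x y -> ->|r x ->]; by rewrite ?addr0 ?mulr0.
  - by move/eqP; rewrite oner_eq0.
  - move=> a b /(congr1 val) /= /eqP; rewrite mulf_eq0 => /orP[] /eqP h; [left|right];
    by apply: val_inj; rewrite /= h.
have := Qm _ ZP (fun x (hx : x = 0) => eq_ind_r Q hQ0 hx) c Qc; by move/eqP; rewrite (negbTE c0).
Qed.

End LocFrac.

Section Comp.
Variables (R : comNzRingType) (p : nat).
Hypothesis pR : p \in [pchar R].

Record qdata (P : R -> Prop) := QData {
  qD : idomainType; qpi : {rmorphism R -> qD};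
  qS : idomainType; qj : {rmorphism qD -> qS};
  qquot : is_quotient_by P qpi; qinj : injective qj;
  qmf : module_finite qj; qfr : F_regular p qS }.

Variable P : R -> Prop.
Variable d : qdata P.

Definition psi : {rmorphism R -> qS d} := (qj d \o qpi d)%FUN.

Lemma psiE x : psi x = qj d (qpi d x). Proof. by []. Qed.

Lemma pS : p \in [pchar (qS d)].
Proof. exact: (rmorph_pchar (qj d) (rmorph_pchar (qpi d) pR)). Qed.

Lemma psi0 x : psi x = 0 <-> P x.
Proof.
rewrite psiE; have [_ hk] := @qquot _ d; rewrite -hk; split; last by move=> ->; rewrite rmorph0.
by move=> h; apply: (@qinj _ d); rewrite h rmorph0.
Qed.

Lemma comp_plus (I : R -> Prop) x : is_ideal I -> ext_ideal psi I (psi x) ->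
  exists c, ~ P c /\ forall e, exists y, frob_power I (p ^ e) y /\ P (c * x ^+ (p ^ e) - y).
Proof.
move=> hI hx; have [phi [phiD phiZ phi1]] := trace_ex (@qinj _ d) (@qmf _ d).
have [hsurj hker] := @qquot _ d.
have [c hc] := hsurj (phi 1); exists c; split.
  by move/hker; rewrite hc => /eqP; rewrite (negbTE phi1).
move=> e; set q := (p ^ e)%N.
have phi0 : phi 0 = 0 by apply/eqP; rewrite -(subrr (phi 0)) -{2}[0]addr0 phiD addrK.
pose K s := exists y, frob_power I q y /\ phi s = qpi d y.
pose G := fun y => exists g, (exists z, I z /\ g = psi z) /\ y = g ^+ q.
have hK : forall s, gen_ideal G s -> K s.
  move=> s [l [hl ->]]; elim: l hl => [|rg l IH] hl.
    by exists 0; split; [apply: ideal_0; apply: frob_power_ideal|rewrite big_nil phi0 rmorph0].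
  rewrite big_cons.
  have [y1 [hy1 e1]] := IH (fun r h => hl r (@mem_behead _ (rg :: l) _ h)).
  have [g [[z [Iz ->]] eg]] := hl rg (mem_head _ _).
  have [t ht] := hsurj (phi rg.1).
  exists (t * z ^+ q + y1); split.
    apply: ideal_add; first exact: frob_power_ideal.
      by case: (frob_power_ideal I q) => _ _; apply; apply: frob_power_gen.
    exact: hy1.
  rewrite phiD eg psiE -rmorphXn -rmorphXn mulrC phiZ e1 -ht -rmorphM -rmorphD.
  by rewrite mulrC.
have hx' := gen_ideal_frob pS e hx.
have [y [hy ey]] := hK _ hx'.
exists y; split => //; apply/hker.
rewrite rmorphB rmorphM rmorphXn hc -ey psiE -rmorphXn.
rewrite [X in _ - X = _](_ : _ = qpi d x ^+ q * phi 1); last by rewrite -phiZ mulr1 rmorphXn.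
by rewrite rmorphXn mulrC subrr.
Qed.

Lemma dom_step (U : R -> Prop) (I : R -> Prop) a c e0 :
  mult_system U -> (forall u, U u -> ~ P u) -> is_ideal I -> ~ P c ->
  (forall e, (e0 <= e)%N -> exists w, U w /\ frob_power I (p ^ e) (w * c * a ^+ (p ^ e))) ->
  exists u, U u /\ ext_ideal psi I (psi (u * a)).
Proof.
move=> [U1 UM] disj hI nc H.
pose V s := exists u, U u /\ s = psi u.
have hV : mult_system V.
  split; first by exists 1; rewrite rmorph1.
  by move=> _ _ [u [Uu ->]] [v [Uv ->]]; exists (u * v); rewrite rmorphM; split => //; apply: UM.
have V0 : forall v, V v -> v != 0.
  by move=> _ [u [Uu ->]]; apply/eqP => /psi0; apply: disj.
have hL := iota_loc hV V0.
pose J := ext_ideal (liota V) (ext_ideal psi I).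
have JI : is_ideal J by apply: ext_ideal_is_ideal.
have hJ : J (liota V (psi a)).
  apply/(@qfr _ d _ _ _ hV hL _ JI); exists (liota V (psi c)); split.
    apply: LT_nonmin; apply/eqP => /(congr1 val) /= /eqP.
    by rewrite tofrac_eq0 => /eqP /psi0.
  exists e0 => e le; have [w [Uw hw]] := H e le.
  have := frob_power_map (liota V) (frob_power_map psi hw).
  rewrite !rmorphM !rmorphXn.
  have [v hv] : exists v, liota V (psi w) * v = 1.
    by case: hL => h _ _; apply: h; exists w.
  move=> h; have := ideal_mulr v (frob_power_ideal _ _) h.
  by rewrite mulrAC [liota V (psi w) * _ * v]mulrAC hv mul1r.
have [v [s [Vv [hs es]]]] := (loc_ext hV hL (liota V (psi a)) (ext_ideal_is_ideal psi I)).1 hJ.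
have := iota_inj (etrans (rmorphM (liota V) _ _) es).
case: Vv => u [Uu ->] ea; exists u; split => //.
by rewrite rmorphM mulrC ea.
Qed.

End Comp.

Lemma prime_expr (A : comPzRingType) (P : A -> Prop) x n : is_prime P -> P (x ^+ n) -> P x.
Proof.
move=> [_ P1 Pp]; elim: n => [|n IH] h; first by rewrite expr0 in h.
by rewrite exprS in h; case: (Pp _ _ h).
Qed.

Lemma prime_mul_notin (A : comPzRingType) (P : A -> Prop) x y : is_prime P -> ~ P x -> ~ P y -> ~ P (x * y).
Proof. by move=> [_ _ Pp] hx hy /Pp []. Qed.

Section Plus.
Variables (R : comNzRingType) (p : nat).
Hypothesis pR : p \in [pchar R].

Lemma plus_tc (I : R -> Prop) x (n : nat) (M : 'I_n -> (R -> Prop)) (m : nat) :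
  is_ideal I ->
  (forall i, is_minimal_prime (M i)) ->
  (forall i j, M i = M j -> i = j) ->
  (forall P, is_minimal_prime P -> exists i, P = M i) ->
  (forall y, (forall i, M i y) -> y ^+ m = 0) ->
  (forall i, exists c, ~ M i c /\ forall e, exists y, frob_power I (p ^ e) y /\ M i (c * x ^+ (p ^ e) - y)) ->
  tight_closure p I x.
Proof.
move=> hI hMm hMinj cover hnil hc.
have Mp i : is_prime (M i) by case: (hMm i).
have MI i : is_ideal (M i) by case: (Mp i).
pose cf i := proj1_sig (constructive_indefinite_description _ (hc i)).
have hcf i : ~ M i (cf i) /\ forall e, exists y, frob_power I (p ^ e) y /\ M i (cf i * x ^+ (p ^ e) - y).
  exact: proj2_sig (constructive_indefinite_description _ (hc i)).
have hef : forall i j, exists e, i != j -> M j e /\ ~ M i e.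
  move=> i j; case: (eqVneq i j) => [->|ij]; first by exists 0.
  apply: NNPP => hn; move/negP: ij; apply; apply/eqP; apply: hMinj.
  have sub : forall e, M j e -> M i e.
    move=> e Mje; apply: NNPP => nMie; apply: hn; exists e => _; done.
  have sub' := (proj2 (hMm i)) (M j) (Mp j) sub.
  apply: functional_extensionality => e; apply: propositional_extensionality; split; [exact: sub'|exact: sub].
pose ef i j := epsilon (inhabits (0 : R)) (fun e => i != j -> M j e /\ ~ M i e).
have hefs i j : i != j -> M j (ef i j) /\ ~ M i (ef i j).
  exact: (epsilon_spec (inhabits (0 : R)) (fun e => i != j -> M j e /\ ~ M i e) (hef i j)).
pose dd i := \prod_(j < n | j != i) ef i j.
have dd_notin i : ~ M i (dd i).
  apply: (big_ind (fun y => ~ M i y)).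
  - by case: (Mp i).
  - by move=> a b; apply: prime_mul_notin.
  - by move=> j ji; case: (hefs i j); rewrite // eq_sym ji.
have dd_in i k : k != i -> M k (dd i).
  move=> ki; rewrite /dd (bigD1 k) //=.
  have [h _] : M k (ef i k) /\ ~ M i (ef i k) by apply: hefs; rewrite eq_sym.
  exact: (ideal_mulr _ (MI k)).
pose c := \sum_(i < n) dd i * cf i.
have c_notin k : ~ M k c.
  rewrite /c (bigD1 k) //= => h.
  have hr : M k (\sum_(i < n | i != k) dd i * cf i).
    apply: (big_ind (M k)); [exact: ideal_0 (MI k)|by move=> a b; apply: (ideal_add (MI k))|].
    by move=> i ik; apply: (ideal_mulr _ (MI k)); apply: dd_in; rewrite eq_sym.
  have : M k (dd k * cf k) by rewrite -(addrK (\sum_(i < n | i != k) dd i * cf i) (dd k * cf k)); apply: (ideal_sub (MI k)).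
  exact: (prime_mul_notin (Mp k) (dd_notin k) (proj1 (hcf k))).
have p1 : (1 < p)%N by apply: prime_gt1; exact: pcharf_prime pR.
exists (c ^+ (p ^ m)); split.
  move=> P Pm; have [i ->] := cover P Pm => h.
  by apply: (c_notin i); apply: (prime_expr (Mp i) h).
exists m => e le; rewrite -(subnK le); set e' := (e - m)%N.
have [Y [hY hw]] : exists Y, frob_power I (p ^ e') Y /\ (c * x ^+ (p ^ e') - Y) ^+ m = 0.
  pose yf i := proj1_sig (constructive_indefinite_description _ ((proj2 (hcf i)) e')).
  have hyf i := proj2_sig (constructive_indefinite_description _ ((proj2 (hcf i)) e')).
  exists (\sum_(i < n) dd i * yf i); split.
    apply: (big_ind (frob_power I (p ^ e'))); [exact: ideal_0 (frob_power_ideal _ _)|by move=> a b; apply: ideal_add; apply: frob_power_ideal|].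
    by move=> i _; case: (frob_power_ideal I (p ^ e')) => _ _; apply; case: (hyf i).
  apply: hnil => k.
  have -> : c * x ^+ (p ^ e') - \sum_(i < n) dd i * yf i = \sum_(i < n) dd i * (cf i * x ^+ (p ^ e') - yf i).
    rewrite /c mulr_suml -sumrB; apply: eq_bigr => i _; by rewrite mulrBr mulrA.
  rewrite (bigD1 k) //=; apply: (ideal_add (MI k)).
    by rewrite mulrC; apply: (ideal_mulr _ (MI k)); case: (hyf k).
  apply: (big_ind (M k)); [exact: ideal_0 (MI k)|by move=> a b; apply: (ideal_add (MI k))|].
  by move=> i ik; apply: (ideal_mulr _ (MI k)); apply: dd_in; rewrite eq_sym.
have hw' : (c * x ^+ (p ^ e') - Y) ^+ (p ^ m) = 0.
  have lt : (m <= p ^ m)%N by apply: ltnW; apply: ltn_expl.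
  by rewrite -(subnK lt) exprD hw mulr0.
have -> : c ^+ (p ^ m) * x ^+ (p ^ (e' + m)) = (c * x ^+ (p ^ e')) ^+ (p ^ m).
  by rewrite exprMn -exprM -expnD.
have -> : c * x ^+ (p ^ e') = Y + (c * x ^+ (p ^ e') - Y) by rewrite addrC subrK.
rewrite (frobD pR) hw' addr0.
exact: (frob_power_frob pR m hY).
Qed.

End Plus.

Lemma size_length (T : Type) (s : seq T) : size s = List.length s.
Proof. by elim: s => //= _ s ->. Qed.

Lemma tc_ideal (R : comNzRingType) (p : nat) (I : R -> Prop) :
  p \in [pchar R] -> is_ideal I -> is_ideal (tight_closure p I).
Proof.
move=> pR hI; split.
- exists 1; split; first by move=> P [[_ P1 _] _].
  by exists 0%N => e _; rewrite mul1r; apply: frob_power_gen; apply: ideal_0.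
- move=> x y [c1 [h1 [e1 H1]]] [c2 [h2 [e2 H2]]]; exists (c1 * c2); split.
    by move=> P hP; apply: prime_mul_notin; [case: hP|apply: h1|apply: h2].
  exists (maxn e1 e2) => e le; rewrite (frobD pR) mulrDr.
  apply: ideal_add; first exact: frob_power_ideal.
    by rewrite mulrAC; apply: ideal_mulr; [apply: frob_power_ideal|apply: H1; apply: leq_trans le; apply: leq_maxl].
  by rewrite -mulrA mulrC; apply: ideal_mulr; [apply: frob_power_ideal|apply: H2; apply: leq_trans le; apply: leq_maxr].
- move=> r x [c [h [e0 H]]]; exists c; split => //; exists e0 => e le.
  rewrite exprMn mulrCA; case: (frob_power_ideal I (p ^ e)) => _ _; apply; exact: H.
Qed.

Unset Implicit Arguments.
Theorem mainTheorem5 (p : nat) (R : comNzRingType) :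
  p \in [pchar R] -> is_noetherian R ->
  (forall P : R -> Prop, is_minimal_prime P ->
     exists (D : idomainType) (pi : {rmorphism R -> D}),
       is_quotient_by P pi /\
       exists (S : idomainType) (j : {rmorphism D -> S}),
         injective j /\ module_finite j /\ F_regular p S) ->
  tc_commutes_with_localization p R.
Proof.
move=> pR hN H I hI U B f hU hL z.
have tcI := tc_ideal pR hI.
split.
  move=> hz; have [u [a [Uu [[c [hc [e0 he]]] e]]]] := (loc_ext hU hL z tcI).1 hz.
  exists (f c); split.
    by move=> Q hQ; apply: (hc _ (minimal_contr hU hL hQ)).
  exists e0 => k le; have h := frob_power_map f (he k le).
  have [v hv] := loc_unit hL Uu.
  have -> : z = f a * v by rewrite -e -mulrA hv mulr1.
  rewrite exprMn mulrA -rmorphXn -rmorphM.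
  exact: (ideal_mulr _ (frob_power_ideal _ _) h).
move=> [cB [hcB [e0 he]]].
have [a [u0 [Uu0 ea]]] := loc_frac hL z.
have [c [v [Uv ecv]]] := loc_frac hL cB.
case: (hU) => U1 UM.
have key : forall k, (e0 <= k)%N -> exists w, U w /\ frob_power I (p ^ k) (w * c * a ^+ (p ^ k)).
  move=> k le; set q := (p ^ k)%N.
  have sub : forall y, frob_power (ext_ideal f I) q y -> ext_ideal f (frob_power I q) y.
    move=> y0; apply: gen_ideal_min; first exact: ext_ideal_is_ideal.
    move=> _ [y [hy ->]]; have [u [x [Uu [Ix e]]]] := (loc_ext hU hL y hI).1 hy.
    apply/(loc_ext hU hL _ (frob_power_ideal I q)); exists (u ^+ q), (x ^+ q); split.
      by elim: (q) => [|t IH]; rewrite ?expr0 // exprS; apply: UM.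
    by split; [apply: frob_power_gen|rewrite rmorphXn -exprMn e rmorphXn].
  have [u' [a' [Uu' [ha' e']]]] := (loc_ext hU hL _ (frob_power_ideal I q)).1 (sub _ (he k le)).
  have E : f (c * a ^+ q * u') = f (a' * v * u0 ^+ q).
    rewrite !rmorphM !rmorphXn -ecv -ea -e' exprMn.
    ring.
  have [w' [Uw' hw']] := loc_eq hL E.
  exists (w' * u'); split; first exact: UM.
  have -> : w' * u' * c * a ^+ q = w' * (c * a ^+ q * u') by ring.
  rewrite hw' mulrC -!mulrA; apply: ideal_mulr; first exact: frob_power_ideal.
  done.
have [L [Lnd [LP [m hm]]]] := noeth_min_enum hN.
pose n := size L.
pose M (i : 'I_n) := List.nth i L (fun _ => False).
have hIn (i : 'I_n) : List.In (M i) L.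
  by apply: List.nth_In; apply/ltP; rewrite -size_length.
have hMm i : is_minimal_prime (M i) by apply/LP.
have hMinj : forall i j, M i = M j -> i = j.
  move=> i j e; apply: val_inj; move: e; apply: (proj1 (List.NoDup_nth L (fun _ => False)) Lnd);
  by apply/ltP; rewrite -size_length.
have cover : forall P, is_minimal_prime P -> exists i, P = M i.
  move=> P /LP /(List.In_nth _ _ (fun _ => False)) [k [/ltP lk ek]].
  rewrite -size_length in lk; by exists (Ordinal lk); rewrite /M /= ek.
have hnil : forall y, (forall i, M i y) -> y ^+ m = 0.
  move=> y hy; apply: hm => P /(List.In_nth _ _ (fun _ => False)) [k [/ltP lk <-]].
  rewrite -size_length in lk; exact: (hy (Ordinal lk)).
have hq : forall P : R -> Prop, is_minimal_prime P -> exists d : qdata p P, True.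
  move=> P hP; have [D [pi [hpi [S [j [jinj [jmf jfr]]]]]]] := H P hP.
  by exists (QData hpi jinj jmf jfr).
pose dat i := proj1_sig (constructive_indefinite_description _ (hq (M i) (hMm i))).
have hu : forall i, exists u, U u /\ ext_ideal (psi (dat i)) I (psi (dat i) (u * a)).
  move=> i; case: (classic (exists u, U u /\ M i u)) => [[u [Uu Mu]]|nd].
    exists u; split => //.
    have -> : psi (dat i) (u * a) = 0.
      apply/psi0; apply: (ideal_mulr _ _ Mu); by case: (hMm i) => [[]].
    exact: ideal_0 (ext_ideal_is_ideal _ _).
  have disj : forall u, U u -> ~ M i u by move=> u Uu Mu; apply: nd; exists u.
  apply: (dom_step (dat i) (c := c) (e0 := e0)) => //.
  move=> Mc; apply: (hcB _ (minimal_ext hU hL (hMm i) disj)).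
  by exists v, c; split.
pose uf i := proj1_sig (constructive_indefinite_description _ (hu i)).
have huf i : U (uf i) /\ ext_ideal (psi (dat i)) I (psi (dat i) (uf i * a)).
  exact: proj2_sig (constructive_indefinite_description _ (hu i)).
pose u := \prod_(i < n) uf i.
have Uu : U u by apply: big_ind => // i _; case: (huf i).
have hua : tight_closure p I (u * a).
  apply: (plus_tc pR (M := M) (m := m)) => // i.
  apply: (comp_plus pR (d := dat i)) => //.
  have h := ideal_mulr (psi (dat i) (\prod_(j < n | j != i) uf j)) (ext_ideal_is_ideal (psi (dat i)) I) (proj2 (huf i)).
  rewrite -rmorphM mulrAC in h.
  by rewrite /u (bigD1 i) //=.
apply/(loc_ext hU hL z tcI); exists (u0 * u), (u * a); split; first exact: UM.
by split => //; rewrite rmorphM mulrA ea -rmorphM mulrC.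
Qed.
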